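(* Let $0<e_b<1/3$ and, for $a\in[e_b/2,e_b]$, consider the initial triple $(p_X,p_Y,p_Z)=(e_b-a,\;a,\;\tfrac32 e_b-a)$. Fix any finite sequence of B steps and P steps whose first step is a B step, let $(p_X',p_Y',p_Z')$ be the result of applying it, and let $R(a)=1-H_2(p_X'+p_Y')-H_2(p_Z'+p_Y')$. Then the minimum of $R(a)$ over $a\in[e_b/2,e_b]$ (the worst case) is attained at $a=e_b/2$.
   Context: $H_2(p)=-p\log_2 p-(1-p)\log_2(1-p)$. A B step maps $(p_X,p_Y,p_Z)$ to $p_X'=(p_X^2+p_Y^2)/p_S$, $p_Y'=2p_Xp_Y/p_S$, $p_Z'=2(1-p_X-p_Y-p_Z)p_Z/p_S$ with $p_S=1-2(p_X+p_Y)(1-p_X-p_Y)$. A P step maps $(p_X,p_Y,p_Z)$, with $p_I=1-p_X-p_Y-p_Z$, to $p_X'=3p_I^2(p_X+p_Y)+6p_Ip_Xp_Z+3p_X^2p_Y+p_X^3$, $p_Y'=6p_Ip_Yp_Z+3p_X(p_Y^2+p_Z^2)+3p_Yp_Z^2+p_Y^3$, $p_Z'=3p_I(p_Y^2+p_Z^2)+6p_Xp_Yp_Z+3p_Y^2p_Z+p_Z^3$. This is the single-photon SARG04 case, where $e_b$ is the bit error rate and $a$ the (unknown) $Y$-error rate. *)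

(* Defs.v *)
From Stdlib Require Import Reals List.
Open Scope R_scope.

(* log base 2; Stdlib's ln is total with ln x = 0 for x <= 0, so 0 * log2 0 = 0,
   matching the convention 0 log 0 = 0. *)
Definition log2 (x : R) : R := ln x / ln 2.

Definition H2 (p : R) : R := - p * log2 p - (1 - p) * log2 (1 - p).

Definition triple := (R * R * R)%type.

Definition B_step (t : triple) : triple :=
  let '(pX, pY, pZ) := t in
  let pS := 1 - 2 * (pX + pY) * (1 - pX - pY) in
  ((pX ^ 2 + pY ^ 2) / pS,
   2 * pX * pY / pS,
   2 * (1 - pX - pY - pZ) * pZ / pS).

Definition P_step (t : triple) : triple :=
  let '(pX, pY, pZ) := t in
  let pI := 1 - pX - pY - pZ in
  (3 * pI ^ 2 * (pX + pY) + 6 * pI * pX * pZ + 3 * pX ^ 2 * pY + pX ^ 3,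
   6 * pI * pY * pZ + 3 * pX * (pY ^ 2 + pZ ^ 2) + 3 * pY * pZ ^ 2 + pY ^ 3,
   3 * pI * (pY ^ 2 + pZ ^ 2) + 6 * pX * pY * pZ + 3 * pY ^ 2 * pZ + pZ ^ 3).

Inductive step := Bst | Pst.

Definition apply_step (s : step) (t : triple) : triple :=
  match s with Bst => B_step t | Pst => P_step t end.

Definition apply_steps (l : list step) (t : triple) : triple :=
  fold_left (fun acc s => apply_step s acc) l t.

Definition init_triple (eb a : R) : triple := (eb - a, a, 3 / 2 * eb - a).

Definition rate (l : list step) (eb a : R) : R :=
  let '(pX, pY, pZ) := apply_steps l (init_triple eb a) in
  1 - H2 (pX + pY) - H2 (pZ + pY).

(* Main.v *)
Require Import Defs.
From Stdlib Require Import Reals List Lra Psatz.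
From Coquelicot Require Import Coquelicot.
Open Scope R_scope.

Lemma ln2_pos : 0 < ln 2.
Proof. rewrite <- ln_1. apply ln_increasing; lra. Qed.

Lemma H2_0 : H2 0 = 0.
Proof. unfold H2, log2. replace (1-0) with 1 by ring. rewrite ln_1. unfold Rdiv. ring. Qed.

Lemma H2_nonneg q : 0 <= q <= 1/2 -> 0 <= H2 q.
Proof.
  intros Hq. destruct (Req_dec q 0) as [->|Hq0]. rewrite H2_0; lra.
  assert (h1 : ln q < 0) by (rewrite <- ln_1; apply ln_increasing; lra).
  assert (h2 : ln (1-q) < 0) by (rewrite <- ln_1; apply ln_increasing; lra).
  pose proof ln2_pos. assert (0 < / ln 2) by (apply Rinv_0_lt_compat; lra).
  unfold H2, log2, Rdiv.
  assert (ln q * / ln 2 < 0) by (apply Rmult_neg_pos; lra).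
  assert (ln (1-q) * / ln 2 < 0) by (apply Rmult_neg_pos; lra).
  nra.
Qed.

Lemma H2_mono p q : 0 <= p <= q -> q <= 1/2 -> H2 p <= H2 q.
Proof.
  intros Hp Hq. destruct (Req_dec p 0) as [->|Hp0].
  { rewrite H2_0. apply H2_nonneg; lra. }
  destruct (Req_dec p q) as [->|Hpq]; [lra|].
  set (df := fun x => (ln (1-x) - ln x) / ln 2).
  destruct (MVT_cor2 H2 df p q) as [c [Hc1 Hc2]]; [lra| |].
  { intros c Hc. apply is_derive_Reals. unfold H2, log2.
    auto_derive. split; [lra|split; [lra|exact I]].
    unfold df. pose proof ln2_pos. replace (1 + - c) with (1 - c) by ring. field. repeat split; lra. }
  assert (ln c < ln (1-c)) by (apply ln_increasing; lra).
  pose proof ln2_pos. assert (0 < / ln 2) by (apply Rinv_0_lt_compat; lra).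
  assert (0 <= df c) by (unfold df, Rdiv; apply Rmult_le_pos; lra).
  nra.
Qed.

Definition lX (t : triple) : R := let '(x, y, z) := t in 1 - 2 * (y + z).
Definition lY (t : triple) : R := let '(x, y, z) := t in 1 - 2 * (x + z).
Definition lZ (t : triple) : R := let '(x, y, z) := t in 1 - 2 * (x + y).

Lemma pS_pos x y : 0 < 1 - 2 * (x + y) * (1 - x - y).
Proof. pose proof (pow2_ge_0 (x + y - 1/2)). nra. Qed.

Lemma B_X t : lX (B_step t) = (lX t ^ 2 + lY t ^ 2) / (1 + lZ t ^ 2).
Proof. destruct t as [[x y] z]. simpl. pose proof (pS_pos x y). field. split; nra. Qed.
Lemma B_Y t : lY (B_step t) = 2 * lX t * lY t / (1 + lZ t ^ 2).
Proof. destruct t as [[x y] z]. simpl. pose proof (pS_pos x y). field. split; nra. Qed.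
Lemma B_Z t : lZ (B_step t) = 2 * lZ t / (1 + lZ t ^ 2).
Proof. destruct t as [[x y] z]. simpl. pose proof (pS_pos x y). field. split; nra. Qed.
Lemma P_X t : lX (P_step t) = (3 * lX t - lX t ^ 3) / 2.
Proof. destruct t as [[x y] z]. simpl. field. Qed.
Lemma P_Y t : lY (P_step t) = lY t * (3 * lZ t ^ 2 - lY t ^ 2) / 2.
Proof. destruct t as [[x y] z]. simpl. field. Qed.
Lemma P_Z t : lZ (P_step t) = lZ t ^ 3.
Proof. destruct t as [[x y] z]. simpl. ring. Qed.

Lemma L1a x : 0 <= x <= 1 -> 0 <= (3 * x - x ^ 3) / 2.
Proof. intros. assert (0 <= x * (3 - x^2)) by (apply Rmult_le_pos; nra). lra. Qed.
Lemma L1b x : 0 <= x <= 1 -> (3 * x - x ^ 3) / 2 <= 1.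
Proof. intros. assert (0 <= (1-x)^2 * (2 + x)) by (apply Rmult_le_pos; nra). nra. Qed.
Lemma L2a y z : 0 <= y <= z -> 0 <= y * (3 * z ^ 2 - y ^ 2) / 2.
Proof. intros. assert (0 <= y * (3 * z ^ 2 - y ^ 2)) by (apply Rmult_le_pos; nra). lra. Qed.
Lemma L2b y z : 0 <= y <= z -> y * (3 * z ^ 2 - y ^ 2) / 2 <= z ^ 3.
Proof. intros. assert (0 <= (z-y)^2 * (2*z + y)) by (apply Rmult_le_pos; nra). nra. Qed.
Lemma L3 z : 0 <= z <= 1 -> z ^ 3 <= 1.
Proof. intros. nra. Qed.
Lemma L4 x y : 0 <= x <= y /\ y <= 1 -> (3 * x - x ^ 3) / 2 <= (3 * y - y ^ 3) / 2.
Proof. intros. assert (0 <= (y - x) * (3 - x^2 - x*y - y^2)) by (apply Rmult_le_pos; nra). nra. Qed.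
Lemma L5 y y' z : 0 <= y <= y' /\ y' <= z ->
  y * (3 * z ^ 2 - y ^ 2) / 2 <= y' * (3 * z ^ 2 - y' ^ 2) / 2.
Proof. intros. assert (0 <= (y' - y) * (3*z^2 - y^2 - y*y' - y'^2)) by (apply Rmult_le_pos; nra). nra. Qed.

Definition Inv (t : triple) : Prop :=
  0 <= lX t <= 1 /\ 0 <= lY t <= lZ t /\ lZ t <= 1.

Definition Rel (s t : triple) : Prop :=
  lZ s = lZ t /\ lX s <= lX t /\ lY s <= lY t.

Lemma step_ok st s t : Inv s -> Inv t -> Rel s t ->
  Inv (apply_step st s) /\ Inv (apply_step st t) /\ Rel (apply_step st s) (apply_step st t).
Proof.
  unfold Inv, Rel.
  destruct st; simpl; [rewrite !B_X, !B_Y, !B_Z | rewrite !P_X, !P_Y, !P_Z];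
  set (xs := lX s); set (ys := lY s); set (zs := lZ s);
  set (xt := lX t); set (yt := lY t); set (zt := lZ t);
  intros [[Hx1 Hx2] [[Hy1 Hy2] Hz]] [[Hx1' Hx2'] [[Hy1' Hy2'] Hz']] [Ez [Ex Ey]];
  rewrite <- Ez in *.
  - assert (D : 0 < 1 + zs ^ 2) by nra.
    repeat split;
    try (apply Rmult_le_pos; [nra | left; apply Rinv_0_lt_compat; exact D]);
    try (apply Rmult_le_compat_r; [left; apply Rinv_0_lt_compat; exact D | nra]);
    try (apply Rmult_le_reg_r with (1 + zs ^ 2); [exact D|]; unfold Rdiv;
         rewrite !Rmult_assoc, Rinv_l by lra; nra).
  - repeat split;
    try apply L1a; try apply L1b; try apply L2a; try apply L2b; try apply L3;
    try apply L4; try apply L5; try reflexivity; lra.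
Qed.

Lemma steps_ok l : forall s t, Inv s -> Inv t -> Rel s t ->
  Inv (apply_steps l s) /\ Inv (apply_steps l t) /\ Rel (apply_steps l s) (apply_steps l t).
Proof.
  induction l as [|st l IH]; intros s t Hs Ht Hr; simpl; [auto|].
  destruct (step_ok st s t Hs Ht Hr) as [A [B C]]. apply (IH _ _ A B C).
Qed.

Lemma rate_eq l eb a : rate l eb a =
  1 - H2 ((1 - lZ (apply_steps l (init_triple eb a))) / 2)
    - H2 ((1 - lX (apply_steps l (init_triple eb a))) / 2).
Proof.
  unfold rate. destruct (apply_steps l (init_triple eb a)) as [[x y] z]. simpl.
  f_equal; [f_equal|]; f_equal; field.
Qed.

Lemma iX eb b : lX (init_triple eb b) = 1 - 3*eb.
Proof. unfold lX, lY, lZ, init_triple. field. Qed.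
Lemma iY eb b : lY (init_triple eb b) = 1 - 5*eb + 4*b.
Proof. unfold lX, lY, lZ, init_triple. field. Qed.
Lemma iZ eb b : lZ (init_triple eb b) = 1 - 2*eb.
Proof. unfold lX, lY, lZ, init_triple. field. Qed.

Lemma steps_cons l t : apply_steps (Bst :: l) t = apply_steps l (B_step t).
Proof. reflexivity. Qed.

Theorem corollary1 :
  forall (eb : R) (l : list step),
    0 < eb < 1 / 3 ->
    (exists l', l = Bst :: l') ->
    forall a : R, eb / 2 <= a <= eb ->
      rate l eb (eb / 2) <= rate l eb a.
Proof.
  intros eb l Heb [l' ->] a Ha.
  assert (K : forall b, eb/2 <= b <= eb -> Inv (B_step (init_triple eb b))).
  { intros b Hb. unfold Inv. rewrite B_X, B_Y, B_Z, iX, iY, iZ.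
    assert (D : 0 < 1 + (1 - 2*eb) ^ 2) by nra.
    repeat split;
    try (apply Rmult_le_pos; [nra | left; apply Rinv_0_lt_compat; exact D]);
    try (apply Rmult_le_compat_r; [left; apply Rinv_0_lt_compat; exact D | nra]);
    try (apply Rmult_le_reg_r with (1 + (1 - 2*eb) ^ 2); [exact D|]; unfold Rdiv;
         rewrite !Rmult_assoc, Rinv_l by lra; nra). }
  assert (Hr : Rel (B_step (init_triple eb (eb/2))) (B_step (init_triple eb a))).
  { unfold Rel. rewrite !B_X, !B_Y, !B_Z, !iX, !iY, !iZ.
    assert (D : 0 < 1 + (1 - 2*eb) ^ 2) by nra. assert (0 <= 1 - 3*eb <= 1 - 5*eb + 4*(eb/2)) by lra. assert (1 - 5*eb + 4*(eb/2) <= 1 - 5*eb + 4*a) by lra.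
    split; [reflexivity|]. split; unfold Rdiv;
    apply Rmult_le_compat_r; try (left; apply Rinv_0_lt_compat; exact D); nra. }
  destruct (steps_ok l' _ _ (K (eb/2) ltac:(lra)) (K _ Ha) Hr) as [[[A1 A2] _] [[[B1 B2] _] [Ez [Ex _]]]].
  rewrite !rate_eq. rewrite !steps_cons.
  rewrite Ez.
  assert (H2 ((1 - lX (apply_steps l' (B_step (init_triple eb a)))) / 2) <=
          H2 ((1 - lX (apply_steps l' (B_step (init_triple eb (eb/2))))) / 2)).
  { apply H2_mono; lra. }
  lra.
Qed.
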